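(* There exists a universal constant $c>0$ such that the following holds. Let $(E,d)$ be a complete separable metric space with a Borel probability measure $\mu$, let $k\geq1$, and let $A_1,\ldots,A_k$ be measurable sets with $(\mu(A_1),\ldots,\mu(A_k))\in\Delta_k$. Let $r=\frac12\min_{i\neq j}d(A_i,A_j)$ and $A_0=E\setminus\left(\bigcup_i A_i\right)_r$. Then \[ \lambda^{(k)}\leq\frac{1}{r^2}\,\psi\left(\frac1c\min_{i}\ln\frac{\mu(A_i)}{\mu(A_0)}\right), \] where $\psi(x)=\max(x,x^2)$.
   Context: For $A,B\subset E$, $d(A,B)=\inf\{d(x,y):x\in A,y\in B\}$. For $A\subset E$ and $r>0$, $A_r=\{x\in E:\exists y\in A,\ d(x,y)<r\}$. $\Delta_k$ is the set of $(a_1,\ldots,a_k)\in[0,1]^k$ with $\sum_j a_j\leq1$ and $a_i+\sum_j a_j\geq1$ for every $i$. The local Lipschitz constant of $f:E\to\mathbb{R}$ is $|\nabla f|(x)=0$ if $x$ is isolated and $\limsup_{y\to x}\frac{|f(x)-f(y)|}{d(x,y)}$ otherwise; $H^1(\mu)=\{f\in L^2(\mu):\int|\nabla f|^2d\mu<\infty\}$; $\lambda^{(k)}=\inf_{V\subset H^1(\mu),\dim V=k+1}\sup_{f\in V\setminus\{0\}}\frac{\int|\nabla f|^2d\mu}{\int f^2d\mu}$. *)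

(* Defs.v *)
From HB Require Import structures.
From mathcomp Require Import all_boot all_order all_algebra.
From mathcomp Require Import all_classical all_reals all_analysis.
From mathcomp Require Import Rstruct Rstruct_topology.

Set Implicit Arguments.
Unset Strict Implicit.
Unset Printing Implicit Defensive.

Import Order.TTheory GRing.Theory Num.Theory.
Local Open Scope classical_set_scope.
Local Open Scope ring_scope.

Section MetricDefs.
Variables (R : realType) (T : Type) (d : T -> T -> R).

Definition is_metric : Prop :=
  [/\ (forall x y, 0 <= d x y),
      (forall x y, d x y = 0 <-> x = y),
      (forall x y, d x y = d y x) &
      (forall x y z, d x z <= d x y + d y z)].

Definition metric_complete : Prop :=
  forall u : nat -> T,
    (forall e : R, 0 < e -> exists N : nat, forall m n : nat,
        (N <= m)%N -> (N <= n)%N -> d (u m) (u n) < e) ->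
    exists x : T, forall e : R, 0 < e -> exists N : nat,
        forall n : nat, (N <= n)%N -> d (u n) x < e.

Definition metric_separable : Prop :=
  exists s : nat -> T, forall (x : T) (e : R), 0 < e -> exists n : nat, d x (s n) < e.

Definition metric_open (U : set T) : Prop :=
  forall x, U x -> exists2 e : R, 0 < e & forall y, d x y < e -> U y.

(* d(A,B) = inf { d(x,y) : x in A, y in B }  (= +oo if A or B is empty) *)
Definition set_dist (A B : set T) : \bar R :=
  ereal_inf [set (d x y)%:E | x in A & y in B].

Definition enlarge (A : set T) (r : \bar R) : set T :=
  [set x | exists2 y, A y & ((d x y)%:E < r)%E].

Definition isolated (x : T) : Prop :=
  exists2 e : R, 0 < e & forall y, d x y < e -> y = x.

Definition local_lip (f : T -> R) (x : T) : \bar R :=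
  if `[< isolated x >] then 0%E
  else ereal_inf [set ereal_sup
          [set (`|f x - f y| / d x y)%:E | y in [set y | 0 < d x y < e]]
        | e in [set e : R | 0 < e]].

End MetricDefs.

Section SpectralDefs.
Variables (R : realType) (dsp : measure_display) (T : measurableType dsp)
  (d : T -> T -> R) (mu : {measure set T -> \bar R}).

Local Open Scope ereal_scope.

Definition H1 (f : T -> R) : Prop :=
  [/\ measurable_fun setT f,
      \int[mu]_x ((f x) ^+ 2)%:E < +oo &
      \int[mu]_x (local_lip d f x * local_lip d f x) < +oo].

Definition rayleigh (g : T -> R) : \bar R :=
  (\int[mu]_x (local_lip d g x * local_lip d g x)) *
  ((fine (\int[mu]_x ((g x) ^+ 2)%:E))^-1)%:E.

(* A family of n functions of H^1(mu), linearly independent in L^2(mu),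
   i.e. spanning an n-dimensional subspace V of H^1(mu) *)
Definition H1_indep_family (n : nat) (f : 'I_n -> T -> R) : Prop :=
  (forall i, H1 (f i)) /\
  (forall c : 'I_n -> R,
     {ae mu, forall x, (\sum_(i < n) c i * f i x)%R = 0%R} ->
     forall i, c i = 0%R).

(* lambda^(k) = inf_{V <= H^1, dim V = k+1} sup_{f in V \ 0} Rayleigh(f) *)
Definition lambda_k (k : nat) : \bar R :=
  ereal_inf [set ereal_sup
      [set rayleigh (fun x => \sum_(i < k.+1) c i * f i x)%R
        | c in [set c : 'I_k.+1 -> R | exists i, c i != 0%R]]
    | f in [set f : 'I_k.+1 -> T -> R | H1_indep_family f]].

End SpectralDefs.

Definition in_Delta (R : realType) (k : nat) (a : 'I_k -> R) : Prop :=
  [/\ (forall i, 0 <= a i <= 1),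
      \sum_(j < k) a j <= 1 &
      (forall i, 1 <= a i + \sum_(j < k) a j)].

Definition psi (R : realType) (x : R) : R := Num.max x (x ^+ 2).

Section Bound.
Variables (R : realType) (dsp : measure_display) (T : measurableType dsp)
  (d : T -> T -> R) (mu : {measure set T -> \bar R}) (k : nat)
  (A : 'I_k -> set T).

Local Open Scope ereal_scope.

(* r = (1/2) min_{i <> j} d(A_i, A_j)   (extended real; +oo when k = 1) *)
Definition half_min_dist : \bar R :=
  ((1 / 2)%:E * ereal_inf [set set_dist d (A p.1) (A p.2)
                          | p in [set p : 'I_k * 'I_k | p.1 != p.2]]).

Definition A0 : set T :=
  ~` enlarge d (\bigcup_(i in [set: 'I_k]) A i) half_min_dist.

Definition min_log_ratio : R :=
  fine (\big[mine/+oo]_(i < k)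
          (ln (fine (mu (A i)) / fine (mu A0)))%:E).

(* The right-hand side (1/r^2) psi((1/c) min_i ln(mu A_i / mu A_0)).
   In the degenerate cases (r = 0, r = +oo, mu A_0 = 0 or some mu A_i = 0)
   the formula is read as +oo. *)
Definition bound_rhs (c : R) : \bar R :=
  if `[< [/\ (0 < half_min_dist < +oo), (0 < mu A0) &
            (forall i, 0 < mu (A i))] >]
  then ((fine half_min_dist ^+ 2)^-1 * psi (c^-1 * min_log_ratio))%:E
  else +oo.

End Bound.

(* Main.v *)
Require Import Defs.
From HB Require Import structures.
From mathcomp Require Import all_boot all_order all_algebra.
From mathcomp Require Import all_classical all_reals all_analysis.
From mathcomp Require Import Rstruct Rstruct_topology.
From mathcomp Require Import ring lra.
From mathcomp Require Import measurable_realfun.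
Import Order.TTheory GRing.Theory Num.Theory.
Local Open Scope classical_set_scope.
Local Open Scope ring_scope.
Set Implicit Arguments.
Unset Strict Implicit.

Section Metric.
Variables (R : realType) (T : Type) (d : T -> T -> R).
Hypothesis hd : is_metric d.

Lemma d_ge0 x y : 0 <= d x y. Proof. by case: hd. Qed.
Lemma d_sym x y : d x y = d y x. Proof. by case: hd. Qed.
Lemma d_tri x y z : d x z <= d x y + d y z. Proof. by case: hd. Qed.
Lemma d_xx x : d x x = 0. Proof. by case: hd => _ h _ _; exact: (proj2 (h x x) erefl). Qed.
Lemma d_eq0 x y : d x y = 0 -> x = y. Proof. by case: hd => _ h _ _; exact: (proj1 (h x y)). Qed.

Definition Dist (U : set T) (x : T) : R := inf [set d x y | y in U].

Variable U : set T.
Hypothesis U0 : U !=set0.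

Lemma Dist_ne x : [set d x y | y in U] !=set0.
Proof. by case: U0 => y Uy; exists (d x y); exists y. Qed.

Lemma Dist_lb x : has_lbound [set d x y | y in U].
Proof. by exists 0 => _ [y _ <-]; exact: d_ge0. Qed.

Lemma Dist_le x y : U y -> Dist U x <= d x y.
Proof. by move=> Uy; apply: (ge_inf (Dist_lb x)); exists y. Qed.

Lemma Dist_ge0 x : 0 <= Dist U x.
Proof. by apply: lb_le_inf; [exact: Dist_ne|move=> _ [y _ <-]; exact: d_ge0]. Qed.

Lemma Dist_lt x t : Dist U x < t -> exists2 y, U y & d x y < t.
Proof. by move=> /(inf_lt (Dist_ne x)) [_ [y Uy <-]] h; exists y. Qed.

Lemma Dist_lip x z : Dist U x <= d x z + Dist U z.
Proof.
rewrite addrC -lerBlDr; apply: lb_le_inf; first exact: Dist_ne.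
move=> _ [y Uy <-]; rewrite lerBlDr. 
apply: le_trans (Dist_le x Uy) _.
by rewrite addrC d_tri.
Qed.

Lemma Dist_lipn x z : `|Dist U x - Dist U z| <= d x z.
Proof.
have h1 := Dist_lip x z; have h2 := Dist_lip z x; rewrite (d_sym z x) in h2.
rewrite ler_norml; apply/andP; split; lra.
Qed.

Lemma Dist0 x : U x -> Dist U x = 0.
Proof. by move=> Ux; apply/le_anti; rewrite Dist_ge0 andbT -(d_xx x) Dist_le. Qed.

Lemma Dist_sub (V : set T) x : V `<=` U -> V !=set0 -> Dist U x <= Dist V x.
Proof.
move=> VU [v Vv]; apply: lb_le_inf; first by exists (d x v); exists v.
by move=> _ [y Vy <-]; apply: Dist_le; exact: VU.
Qed.

End Metric.

Section LocLip.
Variables (R : realType) (T : Type) (d : T -> T -> R).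
Hypothesis hd : is_metric d.

Definition LocLip (g : T -> R) (K : R) (x : T) : Prop :=
  exists2 e : R, 0 < e & forall y, d x y < e -> `|g x - g y| <= K * d x y.

Lemma local_lip_le g K x : 0 <= K -> LocLip g K x -> (local_lip d g x <= K%:E)%E.
Proof.
move=> K0 [e e0 he]; rewrite /local_lip; case: asboolP => _; first by rewrite lee_fin.
apply: (@le_trans _ _ (ereal_sup [set (`|g x - g y| / d x y)%:E | y in [set y | 0 < d x y < e]])).
  by apply: ereal_inf_lbound; exists e.
apply: ge_ereal_sup => _ [y /andP[y0 ye] <-]; rewrite lee_fin ler_pdivrMr //.
exact: he.
Qed.

Lemma local_lip_ge0 g x : (0 <= local_lip d g x)%E.
Proof.
rewrite /local_lip; case: asboolP => [_//|niso].
apply: le_ereal_inf_tmp => _ [e e0 <-].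
have [y ye yx] : exists2 y, d x y < e & y <> x.
  apply: contrapT => hn; apply: niso; exists e => // y ye.
  by apply: contrapT => yx; apply: hn; exists y.
have y0 : 0 < d x y.
  rewrite lt_neqAle (d_ge0 hd) andbT; apply/eqP => /esym /(d_eq0 hd) xy.
  by apply: yx; rewrite xy.
apply: le_ereal_sup_tmp; exists (`|g x - g y| / d x y)%:E.
  by exists y => //=; apply/andP.
by rewrite lee_fin divr_ge0 // ltW.
Qed.

Lemma LocLip0 x : LocLip (fun=> 0) 0 x.
Proof. by exists 1 => // y _; rewrite subrr normr0 mul0r. Qed.

Lemma LocLipD f g K1 K2 x : LocLip f K1 x -> LocLip g K2 x ->
  LocLip (fun y => f y + g y) (K1 + K2) x.
Proof.
move=> [e1 e10 h1] [e2 e20 h2]; exists (Num.min e1 e2); first by rewrite lt_min e10.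
move=> y; rewrite lt_min => /andP[y1 y2].
rewrite (_ : f x + g x - (f y + g y) = (f x - f y) + (g x - g y)); last by ring.
by rewrite (le_trans (ler_normD _ _))// mulrDl lerD// ?h1 ?h2.
Qed.

Lemma LocLipZ f K c x : LocLip f K x -> LocLip (fun y => c * f y) (`|c| * K) x.
Proof.
move=> [e e0 h]; exists e => // y ye.
by rewrite -mulrBr normrM -mulrA ler_wpM2l// h.
Qed.

Lemma LocLip_sum (I : eqType) (s : seq I) (c : I -> R) (F : I -> T -> R) (K : I -> R) x :
  (forall i, LocLip (F i) (K i) x) ->
  LocLip (fun y => \sum_(i <- s) c i * F i y) (\sum_(i <- s) `|c i| * K i) x.
Proof.
move=> h; elim: s => [|i s ih].
  have [e e0 he] := LocLip0 x; exists e => // y ye; rewrite !big_nil.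
  by rewrite subrr normr0 mul0r.
have [e e0 he] := LocLipD (LocLipZ (c i) (h i)) ih.
by exists e => // y ye; rewrite !big_cons; exact: he.
Qed.

End LocLip.

Section Clamp.
Variable R : realType.

Definition clamp01 (t : R) : R := Num.min 1 (Num.max 0 t).

Lemma clamp1 t : 1 <= t -> clamp01 t = 1.
Proof. by move=> h; rewrite /clamp01 (max_r (le_trans ler01 h)) min_l. Qed.
Lemma clamp0 t : t <= 0 -> clamp01 t = 0.
Proof. by move=> h; rewrite /clamp01 (max_l h) min_r. Qed.
Lemma clampid t : 0 <= t <= 1 -> clamp01 t = t.
Proof. by case/andP=> h0 h1; rewrite /clamp01 (max_r h0) min_r. Qed.

Lemma clamp_cases t : [\/ (t <= 0 /\ clamp01 t = 0), (0 <= t <= 1 /\ clamp01 t = t)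
   | (1 <= t /\ clamp01 t = 1)].
Proof.
have [h0|h0] : t <= 0 \/ 0 < t by case: leP; [left|right].
  by apply: Or31; split => //; exact: clamp0.
have [h1|h1] : t <= 1 \/ 1 < t by case: leP; [left|right].
  have ht : 0 <= t <= 1 by rewrite (ltW h0).
  by apply: Or32; split => //; exact: clampid.
by apply: Or33; split; [exact: ltW|exact/clamp1/ltW].
Qed.

Lemma clamp_lip u v : `|clamp01 u - clamp01 v| <= `|u - v|.
Proof.
have h1 := ler_norm (u - v); have h2 := ler_norm (v - u); rewrite distrC in h2.
rewrite ler_norml.
case: (clamp_cases u) => [[hu ->]|[/andP[hu hu'] ->]|[hu ->]];
case: (clamp_cases v) => [[hv ->]|[/andP[hv hv'] ->]|[hv ->]];
apply/andP; split; lra.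
Qed.

Lemma clamp_ge0 t : 0 <= clamp01 t.
Proof. by case: (clamp_cases t) => [[_ ->]|[/andP[? ?] ->]|[_ ->]]. Qed.
Lemma clamp_le1 t : clamp01 t <= 1.
Proof. by case: (clamp_cases t) => [[_ ->]|[/andP[? ?] ->]|[_ ->]]. Qed.

Variables (T : Type) (d : T -> T -> R).
Hypothesis hd : is_metric d.

Lemma clamp_loc (D : T -> R) (a b : R) x :
  (forall y z, `|D y - D z| <= d y z) ->
  LocLip d (fun y => clamp01 (a + b * D y))
    (\1_[set y | 0 <= a + b * D y <= 1] x * `|b|) x.
Proof.
move=> hD; rewrite indicE; set t := a + b * D x.
have key y : `|t - (a + b * D y)| <= `|b| * d x y.
  rewrite /t (_ : a + b * D x - (a + b * D y) = b * (D x - D y)); last by ring.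
  by rewrite normrM ler_wpM2l // hD.
have b10 : 0 < `|b| + 1 by rewrite ltr_wpDl.
have [hx|hx] := pselect ([set y | 0 <= a + b * D y <= 1] x).
  have /andP[t0 t1] := hx.
  exists 1 => // y _; rewrite (mem_set hx) mul1r; apply: le_trans (clamp_lip _ _) _; exact: key.
have [t1|t1] := ltP 1 t.
  exists ((t - 1) / (`|b| + 1)); first by rewrite divr_gt0 // subr_gt0.
  move=> y hy; rewrite (memNset hx) mul0r mul0r clamp1 ?(ltW t1) // clamp1 ?subrr ?normr0 //.
  have := key y; rewrite ler_norml => /andP[_ k2].
  have : `|b| * d x y <= `|b| * ((t - 1) / (`|b| + 1)) by rewrite ler_wpM2l // ltW.
  have : `|b| * ((t - 1) / (`|b| + 1)) <= (t - 1).
    rewrite mulrA ler_pdivrMr //; have := normr_ge0 b; nra.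
  lra.
have t0 : t < 0.
  rewrite ltNge; apply/negP => t0; apply: hx; rewrite /= -/t t0 t1 //.
exists ((- t) / (`|b| + 1)); first by rewrite divr_gt0 // oppr_gt0.
move=> y hy; rewrite (memNset hx) mul0r mul0r clamp0 ?(ltW t0) // clamp0 ?subrr ?normr0 //.
have := key y; rewrite ler_norml => /andP[k1 _].
have : `|b| * d x y <= `|b| * ((- t) / (`|b| + 1)) by rewrite ler_wpM2l // ltW.
have : `|b| * ((- t) / (`|b| + 1)) <= - t.
  rewrite mulrA ler_pdivrMr //; have := normr_ge0 b; nra.
lra.
Qed.

End Clamp.

Section Meas.
Variables (R : realType) (dsp : measure_display) (T : measurableType dsp)
  (mu : probability T R).

Definition pm (X : set T) : R := fine (mu X).

Lemma pmE X : measurable X -> mu X = (pm X)%:E.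
Proof. by move=> mX; rewrite /pm fineK // fin_num_measure. Qed.

Lemma pm_ge0 X : 0 <= pm X.
Proof. by rewrite /pm fine_ge0. Qed.

Lemma pm_le1 X : measurable X -> pm X <= 1.
Proof. by move=> mX; rewrite -lee_fin -pmE // probability_le1. Qed.

Lemma pmU X Y : measurable X -> measurable Y -> X `&` Y = set0 ->
  pm (X `|` Y) = pm X + pm Y.
Proof.
move=> mX mY XY; apply: EFin_inj; rewrite EFinD -!pmE //; last exact: measurableU.
exact: measureU.
Qed.

Lemma pm_le X Y : measurable X -> measurable Y -> X `<=` Y -> pm X <= pm Y.
Proof. by move=> mX mY XY; rewrite -lee_fin -!pmE // le_measure // inE. Qed.

Lemma pm_pos X : measurable X -> (0 < mu X)%E -> 0 < pm X.
Proof. by move=> mX; rewrite pmE // lte_fin. Qed.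

Lemma pm_sum n (F : 'I_n -> set T) : (forall i, measurable (F i)) ->
  (forall i j x, i != j -> F i x -> F j x -> False) ->
  pm (\big[setU/set0]_(i < n) F i) = \sum_(i < n) pm (F i).
Proof.
move=> mF dF; apply: EFin_inj; rewrite -pmE; last exact: bigsetU_measurable.
rewrite measure_bigsetU_ord //.
  rewrite -sumEFin; apply: eq_bigr => i _; exact: pmE.
move=> i j _ _ [x [Fi Fj]]; apply/eqP; apply: contrapT => /negP hij.
exact: (dF i j x hij).
Qed.

Lemma bigsetU_ex (I : Type) (s : seq I) (F : I -> set T) x :
  (\big[setU/set0]_(i <- s) F i) x -> exists i, F i x.
Proof.
elim: s => [|i s ih]; rewrite ?big_nil ?big_cons // => -[Fi|/ih//]; by exists i.
Qed.

Lemma pm_sum_le1 n (B : set T) (F : 'I_n -> set T) : measurable B ->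
  (forall i, measurable (F i)) ->
  (forall i j x, i != j -> F i x -> F j x -> False) ->
  (forall i x, B x -> F i x -> False) ->
  pm B + \sum_(i < n) pm (F i) <= 1.
Proof.
move=> mB mF dF dB; rewrite -pm_sum // -pmU //.
- apply: pm_le1; apply: measurableU => //; exact: bigsetU_measurable.
- exact: bigsetU_measurable.
apply/seteqP; split => // x [Bx] /bigsetU_ex [i Fi].
exact: (dB i x Bx Fi).
Qed.

Local Open Scope ereal_scope.

Lemma int_le_nm (f1 f2 : T -> \bar R) : (forall x, 0 <= f1 x) ->
  (forall x, f1 x <= f2 x) -> \int[mu]_x f1 x <= \int[mu]_x f2 x.
Proof.
move=> f10 f12.
have f20 x : 0 <= f2 x by exact: le_trans (f10 x) (f12 x).
rewrite !ge0_integralTE //.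
apply: ereal_sup_le => _ [h hf <-]; exists h => // x.
exact: le_trans (hf x) (f12 x).
Qed.

Lemma int_sum_indic n (b : 'I_n -> R) (S : 'I_n -> set T) :
  (forall i, measurable (S i)) -> (forall i, (0 <= b i)%R) ->
  \int[mu]_x (\sum_(i < n) b i * \1_(S i) x)%:E = (\sum_(i < n) b i * pm (S i))%:E.
Proof.
move=> mS b0.
under eq_integral do rewrite -sumEFin.
have hm i : measurable_fun setT (fun x => (b i * \1_(S i) x)%:E).
  apply/measurable_EFinP; apply: measurable_funM => //.
rewrite ge0_integral_sum //; last by move=> i x _; rewrite lee_fin mulr_ge0.
rewrite -sumEFin; apply: eq_bigr => i _.
under eq_integral do rewrite EFinM.
rewrite ge0_integralZl //.
- by rewrite integral_indic // setIT EFinM; congr (_ * _); exact: pmE.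
- exact/measurable_EFinP/measurable_indic.
- by rewrite lee_fin.


Qed.

Lemma int_bounded (f : T -> R) (M : R) : measurable_fun setT f ->
  (forall x, 0 <= f x <= M)%R -> \int[mu]_x (f x)%:E <= M%:E.
Proof.
move=> mf hf.
apply: (@le_trans _ _ (\int[mu]_x (cst M%:E x))).
  apply: ge0_le_integral => //.
  - by move=> x _; rewrite lee_fin; case/andP: (hf x).
  - exact/measurable_EFinP.
  - by move=> x _; rewrite lee_fin; case/andP: (hf x).
rewrite integral_cst // -[leRHS]mule1 le_eqVlt; apply/orP; left; apply/eqP.
congr (_ * _); exact: probability_setT.
Qed.

End Meas.

Section Key.
Variables (R : realType) (dsp : measure_display) (T : measurableType dsp)
  (d : T -> T -> R) (mu : probability T R) (n : nat).
Variables (F : 'I_n -> T -> R) (S C : 'I_n -> set T) (L : 'I_n -> R).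
Hypothesis hd : is_metric d.
Hypothesis mF : forall i, measurable_fun setT (F i).
Hypothesis F01 : forall i x, 0 <= F i x <= 1.
Hypothesis mS : forall i, measurable (S i).
Hypothesis mC : forall i, measurable (C i).
Hypothesis FC1 : forall i x, C i x -> F i x = 1.
Hypothesis FC0 : forall i j x, i != j -> C i x -> F j x = 0.
Hypothesis Cpos : forall i, (0 < mu (C i))%E.
Hypothesis FL : forall i x, LocLip d (F i) (\1_(S i) x * L i) x.
Hypothesis Sdisj : forall i j x, i != j -> S i x -> S j x -> False.
Hypothesis L0 : forall i, 0 <= L i.

Lemma disj_sum (a : 'I_n -> R) (P : 'I_n -> set T) x :
  (forall i j, i != j -> P i x -> P j x -> False) ->
  (\sum_i a i * \1_(P i) x) ^+ 2 = \sum_i a i ^+ 2 * \1_(P i) x.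
Proof.
move=> hP; have [[i0 Pi0]|nP] := pselect (exists i, P i x).
  have z j : j != i0 -> \1_(P j) x = 0 :> R.
    move=> ji; rewrite indicE memNset // => Pj; exact: (hP j i0 ji Pj Pi0).
  have e (b : 'I_n -> R) : \sum_i b i * \1_(P i) x = b i0.
    rewrite (bigD1 i0) //= big1 ?addr0; first by rewrite indicE mem_set // mulr1.
    by move=> j /z ->; rewrite mulr0.
  by rewrite !e.
rewrite !big1 ?expr0n // => j _; rewrite indicE memNset ?mulr0 // => Pj;
  apply: nP; by exists j.
Qed.

Lemma msum (s : seq 'I_n) (G : 'I_n -> T -> R) :
  (forall i, measurable_fun setT (G i)) ->
  measurable_fun setT (fun x => \sum_(i <- s) G i x).
Proof.
move=> mG; elim: s => [|i s ih].
  by under eq_fun do rewrite big_nil; exact: measurable_cst.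
under eq_fun do rewrite big_cons.
exact: measurable_funD.
Qed.

Lemma meas_comb (c : 'I_n -> R) (s : seq 'I_n) :
  measurable_fun setT (fun x => \sum_(i <- s) c i * F i x).
Proof.
elim: s => [|i s ih].
  by under eq_fun do rewrite big_nil; exact: measurable_cst.
under eq_fun do rewrite big_cons.
by apply: measurable_funD => //; apply: measurable_funM => //.
Qed.

Lemma lip_sq (c : 'I_n -> R) x :
  (local_lip d (fun y => (\sum_i c i * F i y)%R) x *
   local_lip d (fun y => (\sum_i c i * F i y)%R) x <=
   ((\sum_i (c i ^+ 2 * L i ^+ 2) * \1_(S i) x)%R)%:E)%E.
Proof.
have K0 : 0 <= \sum_i `|c i| * (\1_(S i) x * L i).
  by apply: sumr_ge0 => i _; rewrite mulr_ge0 // mulr_ge0.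
have hl := local_lip_le K0 (LocLip_sum (index_enum _) c (fun i => FL i x)).
apply: le_trans (lee_pmul (local_lip_ge0 hd _ _) (local_lip_ge0 hd _ _) hl hl) _.
rewrite -EFinM lee_fin -expr2.
under eq_bigr do rewrite mulrCA mulrC.
rewrite disj_sum; last by move=> i j ij; exact: Sdisj.
by apply: ler_sum => i _; rewrite exprMn -normrX ger0_norm ?sqr_ge0.
Qed.


Lemma F0 i x : 0 <= F i x. Proof. by case/andP: (F01 i x). Qed.
Lemma F1 i x : F i x <= 1. Proof. by case/andP: (F01 i x). Qed.

Lemma gC (c : 'I_n -> R) i x : C i x -> \sum_j c j * F j x = c i.
Proof.
move=> Ci; rewrite (bigD1 i) //= FC1 // mulr1 big1 ?addr0 // => j ji.
by rewrite (FC0 (i := i)) ?mulr0 // eq_sym.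
Qed.

Lemma Cdisj i j x : i != j -> C i x -> C j x -> False.
Proof.
move=> ij Ci Cj; have := FC0 ij Ci; rewrite FC1 // => /eqP; by rewrite oner_eq0.
Qed.

Lemma sq_pos (a : R) : a != 0 -> 0 < a ^+ 2.
Proof. by move=> a0; rewrite lt_neqAle sqr_ge0 andbT eq_sym sqrf_eq0. Qed.

Lemma rayleigh_le (c : 'I_n -> R) (B : R) (i0 : 'I_n) : c i0 != 0 -> 0 <= B ->
  (forall i, L i ^+ 2 * pm mu (S i) <= B * pm mu (C i)) ->
  (rayleigh d mu (fun x => (\sum_i c i * F i x)%R) <= B%:E)%E.
Proof.
move=> ci0 B0 hB.
set g := fun x => \sum_i c i * F i x.
set Num := \sum_i (c i ^+ 2 * L i ^+ 2) * pm mu (S i).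
set Den := \sum_i c i ^+ 2 * pm mu (C i).
have I1 : (\int[mu]_x (local_lip d g x * local_lip d g x) <= Num%:E)%E.
  apply: (@le_trans _ _ (\int[mu]_x ((\sum_i (c i ^+ 2 * L i ^+ 2) * \1_(S i) x)%R)%:E)%E).
    apply: int_le_nm => x; last exact: lip_sq.
    by apply: mule_ge0; exact: local_lip_ge0.
  by rewrite int_sum_indic // => i; rewrite mulr_ge0 // sqr_ge0.
have mg : measurable_fun setT (fun x => g x ^+ 2).
  by apply: measurable_funX; exact: meas_comb.
have Mg x : 0 <= g x ^+ 2 <= (\sum_i `|c i|) ^+ 2.
  rewrite sqr_ge0 /=.
  have h1 : `|g x| <= \sum_i `|c i|.
    apply: le_trans (ler_norm_sum _ _ _) _; apply: ler_sum => i _.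
    by rewrite normrM (ger0_norm (F0 i x)); apply: ler_piMr; [exact: normr_ge0|exact: F1].
  have h2 := normr_ge0 (g x).
  rewrite -real_normK ?num_real //; nra.
have I2hi : (\int[mu]_x ((g x ^+ 2)%:E) <= ((\sum_i `|c i|) ^+ 2)%:E)%E.
  exact: int_bounded.
have I2lo : (Den%:E <= \int[mu]_x ((g x ^+ 2)%:E))%E.
  rewrite -int_sum_indic //; last by move=> i; exact: sqr_ge0.
  apply: ge0_le_integral => //.
  - by move=> x _; rewrite lee_fin; apply: sumr_ge0 => i _; rewrite mulr_ge0 // sqr_ge0.
  - apply/measurable_EFinP; apply: msum => i.
    by apply: measurable_funM => //; exact: measurable_indic.
  - exact/measurable_EFinP.
  move=> x _; rewrite lee_fin.
  have [[i1 Ci1]|nC] := pselect (exists i, C i x).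
    rewrite /g (gC c Ci1) (bigD1 i1) //= big1 ?addr0.
      by rewrite indicE mem_set // mulr1.
    move=> j ji; rewrite indicE memNset ?mulr0 // => Cj.
    exact: (Cdisj ji Cj Ci1).
  rewrite big1 ?sqr_ge0 // => j _; rewrite indicE memNset ?mulr0 // => Cj.
  by apply: nC; exists j.
have Den0 : 0 < Den.
  rewrite /Den (bigD1 i0) //=.
  have h1 : 0 < c i0 ^+ 2 * pm mu (C i0) by rewrite mulr_gt0 ?sq_pos ?pm_pos.
  have h2 : 0 <= \sum_(i | i != i0) c i ^+ 2 * pm mu (C i).
    by apply: sumr_ge0 => i _; rewrite mulr_ge0 ?sqr_ge0 ?pm_ge0.
  lra.
set I2 := (\int[mu]_x ((g x ^+ 2)%:E))%E in I2hi I2lo *.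
have I2fin : I2 \is a fin_num.
  rewrite ge0_fin_numE; last by apply: le_trans I2lo; rewrite lee_fin ltW.
  exact: le_lt_trans I2hi (ltry _).
have vE : I2 = (fine I2)%:E by rewrite fineK.
have Dv : Den <= fine I2 by rewrite -lee_fin -vE.
have v0 : 0 < fine I2 by exact: lt_le_trans Den0 Dv.
have NumB : Num <= B * Den.
  rewrite /Num /Den mulr_sumr; apply: ler_sum => i _.
  have := hB i; have := sqr_ge0 (c i); rewrite -mulrA; nra.
rewrite /rayleigh -/g -/I2.
apply: le_trans (lee_wpmul2r _ I1) _; first by rewrite lee_fin invr_ge0 ltW.
rewrite -EFinM lee_fin ler_pdivrMr //.
apply: le_trans NumB _; exact: ler_wpM2l.
Qed.

End Key.


Lemma LocLip_mono (R : realType) (T : Type) (d : T -> T -> R) (g : T -> R) K K' x :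
  is_metric d -> K <= K' -> LocLip d g K x -> LocLip d g K' x.
Proof.
move=> hd KK [e e0 h]; exists e => // y ye; apply: le_trans (h y ye) _.
by rewrite ler_wpM2r // d_ge0.
Qed.

Lemma key_lambda (R : realType) (dsp : measure_display) (T : measurableType dsp)
  (d : T -> T -> R) (mu : probability T R) (k : nat)
  (F : 'I_k.+1 -> T -> R) (S C : 'I_k.+1 -> set T) (L : 'I_k.+1 -> R) (B : R) :
  is_metric d ->
  (forall i, measurable_fun setT (F i)) ->
  (forall i x, 0 <= F i x <= 1) ->
  (forall i, measurable (S i)) -> (forall i, measurable (C i)) ->
  (forall i x, C i x -> F i x = 1) ->
  (forall i j x, i != j -> C i x -> F j x = 0) ->
  (forall i, (0 < mu (C i))%E) ->
  (forall i x, LocLip d (F i) (\1_(S i) x * L i) x) ->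
  (forall i j x, i != j -> S i x -> S j x -> False) ->
  (forall i, 0 <= L i) -> 0 <= B ->
  (forall i, L i ^+ 2 * pm mu (S i) <= B * pm mu (C i)) ->
  (lambda_k d mu k <= B%:E)%E.
Proof.
move=> hd mF F01 mS mC FC1 FC0 Cpos FL Sdisj L0 B0 hB.
apply: (@le_trans _ _ (ereal_sup [set rayleigh d mu (fun x => (\sum_(i < k.+1) c i * F i x)%R)
        | c in [set c : 'I_k.+1 -> R | exists i, c i != 0%R]])); last first.
  apply: ge_ereal_sup => _ [c [i ci] <-].
  exact: (rayleigh_le hd mF F01 mS mC FC1 FC0 Cpos FL Sdisj L0 ci B0 hB).
apply: ereal_inf_lbound; exists F => //; split.
  move=> i; split => //.
    apply: le_lt_trans (ltry 1%R).
    apply: int_bounded; first exact: measurable_funX.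
    move=> x; rewrite sqr_ge0 /=; have := F01 i x; case/andP => h0 h1.
    by rewrite expr_le1.
  apply: le_lt_trans (ltry (L i ^+ 2)).
  apply: (@le_trans _ _ (\int[mu]_x (L i ^+ 2)%:E)%E).
    apply: int_le_nm => x.
      by apply: mule_ge0; exact: local_lip_ge0.
    have hl : (local_lip d (F i) x <= (L i)%:E)%E.
      apply: local_lip_le => //; apply: LocLip_mono (FL i x) => //.
      by rewrite ler_piMl // indicE; case: (_ \in _); rewrite ?ler01.
    apply: le_trans (lee_pmul (local_lip_ge0 hd _ _) (local_lip_ge0 hd _ _) hl hl) _.
    by rewrite -EFinM expr2.
  apply: int_bounded; first exact: measurable_cst.
  by move=> _; rewrite sqr_ge0 lexx.
move=> c [N [mN N0 hN]] i.
have [x [Cx Nx]] : exists x, C i x /\ ~ N x.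
  apply: contrapT => hn.
  have CN : C i `<=` N.
    by move=> x Cx; apply: contrapT => Nx; apply: hn; exists x.
  have N0' : mu N = 0%E := N0.
  have h : (mu (C i) <= mu N)%E := le_measure mu (mem_set (mC i)) (mem_set mN) CN.
  by move: h; rewrite N0' => /(lt_le_trans (Cpos i)); rewrite ltxx.
have Px : (\sum_(j < k.+1) c j * F j x)%R = 0%R.
  by apply: contrapT => nP; apply: Nx; apply: hN.
by rewrite -(gC FC1 FC0 c Cx).
Qed.

Section Aux.
Variable R : realType.

Lemma pigeon (N : nat) (x : nat -> R) (M : R) : (0 < N)%N ->
  \sum_(j < N) x j <= M -> exists j, (j < N)%N /\ x j <= M / N%:R.
Proof.
move=> N0 hs; apply: contrapT => hn.
have h j : (j < N)%N -> M / N%:R < x j.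
  by move=> jN; rewrite ltNge; apply/negP => hj; apply: hn; exists j.
have : \sum_(j < N) (M / N%:R) < \sum_(j < N) x j.
  apply: ltr_sum; first by apply/hasP; exists (Ordinal N0); rewrite ?mem_index_enum.
  by move=> j _; apply: h.
have NE : (N%:R : R) != 0 by rewrite pnatr_eq0 -lt0n.
rewrite sumr_const card_ord -[_ *+ N]mulr_natr divfK //.
by move=> /(lt_le_trans)/(_ hs); rewrite ltxx.
Qed.

Lemma telesc (N : nat) (u : nat -> R) :
  \sum_(j < N) (u j - u j.+1) = u 0%N - u N.
Proof.
elim: N => [|N ih]; first by rewrite big_ord0 subrr.
by rewrite big_ord_recr /= ih; ring.
Qed.

Lemma ln_ge1V (t : R) : 0 < t -> 1 - t^-1 <= ln t.
Proof.
move=> t0; have := expR_ge1Dx (- ln t); rewrite expRN lnK ?posrE //; lra.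
Qed.

Lemma exp_small (x : R) : 0 <= x -> x <= 1/2 -> expR x <= 1 + 2 * x.
Proof.
move=> x0 x1; have := expR_ge1Dx (- x); rewrite expRN => h.
have ex := expR_gt0 x.
have h2 : (1 - x) * expR x <= 1.
  by have := ler_wpM2r (ltW ex) h; rewrite mulVf ?gt_eqF.
nra.
Qed.

Variables (T : Type) (d : T -> T -> R).
Hypothesis hd : is_metric d.

Lemma Dist_open (V : set T) (a : R) : V !=set0 ->
  metric_open d [set y | a < Dist d V y].
Proof.
move=> V0 y /= ay; exists (Dist d V y - a); first by rewrite subr_gt0.
move=> z hz /=; have := Dist_lip hd V0 y z; lra.
Qed.

End Aux.

Section MeasDist.
Variables (R : realType) (dsp : measure_display) (T : measurableType dsp)
  (d : T -> T -> R).
Hypothesis hd : is_metric d.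
Hypothesis hB : @measurable dsp T = <<s [set U | metric_open d U] >>.

Lemma meas_Dist (V : set T) : V !=set0 -> measurable_fun setT (Dist d V).
Proof.
move=> V0; apply: (measurability _ (RGenOInfty.measurableE R)) => //.
move=> /= _ [_ [x ->] <-]; rewrite setTI.
rewrite hB; apply: sub_sigma_algebra.
have -> : Dist d V @^-1` `]x, +oo[ = [set y | x < Dist d V y].
  by apply/seteqP; split => y; rewrite /= in_itv /= andbT.
exact: Dist_open.
Qed.

Lemma meas_itv_set (t : T -> R) (a b : R) : measurable_fun setT t ->
  measurable [set y | a <= t y <= b].
Proof.
move=> mt; have := mt measurableT _ (measurable_itv `[a, b]).
by rewrite setTI; congr measurable; apply/seteqP; split => y; rewrite /= in_itv.
Qed.

Lemma meas_ge_set (t : T -> R) (a : R) : measurable_fun setT t ->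
  measurable [set y | a <= t y].
Proof.
move=> mt; have := mt measurableT _ (measurable_itv `[a, +oo[).
by rewrite setTI; congr measurable; apply/seteqP; split => y; rewrite /= in_itv /= andbT.
Qed.

Lemma meas_clamp (t : T -> R) : measurable_fun setT t ->
  measurable_fun setT (fun y => clamp01 (t y)).
Proof.
move=> mt; rewrite /clamp01.
exact: (measurable_minr (measurable_cst _) (measurable_maxr (measurable_cst _) mt)).
Qed.

Lemma meas_aff (D : T -> R) (a b : R) : measurable_fun setT D ->
  measurable_fun setT (fun y => a + b * D y).
Proof. by move=> mD; apply: measurable_funD => //; apply: measurable_funM. Qed.

End MeasDist.

Section OC.
Variables (X : Type) (k : nat).
Definition oc (x0 : X) (xs : 'I_k -> X) (j : 'I_k.+1) : X :=
  match unlift ord0 j with Some i => xs i | None => x0 end.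
Lemma oc0 x0 xs : oc x0 xs ord0 = x0.
Proof. by rewrite /oc unlift_none. Qed.
Lemma ocl x0 xs i : oc x0 xs (lift ord0 i) = xs i.
Proof. by rewrite /oc liftK. Qed.
End OC.

Lemma ocP k (P : 'I_k.+1 -> Prop) : P ord0 -> (forall i, P (lift ord0 i)) -> forall j, P j.
Proof. by move=> h0 hl j; case: (unliftP ord0 j) => [i ->|->]. Qed.

Lemma Dist_glb (R : realType) (T : Type) (d : T -> T -> R) (V : set T) x a :
  is_metric d -> V !=set0 -> (forall y, V y -> a <= d x y) -> a <= Dist d V x.
Proof.
move=> hd V0 h; apply: lb_le_inf; first exact: Dist_ne.
by move=> _ [y Vy <-]; exact: h.
Qed.

Section Main.
Variables (R : realType) (dsp : measure_display) (T : measurableType dsp)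
  (d : T -> T -> R) (mu : probability T R) (k : nat) (A : 'I_k -> set T).
Hypothesis hd : is_metric d.
Hypothesis hB : @measurable dsp T = <<s [set U | metric_open d U] >>.
Hypothesis k0 : (0 < k)%N.
Hypothesis mA : forall i, measurable (A i).
Hypothesis hD : in_Delta (fun i => fine (mu (A i))).
Hypothesis hr : (0 < half_min_dist d A < +oo)%E.
Hypothesis hA0 : (0 < mu (A0 d A))%E.
Hypothesis hAi : forall i, (0 < mu (A i))%E.

Let hm := half_min_dist d A.
Let r := fine hm.

Lemma hmE : hm = r%:E.
Proof.
case/andP: hr => h1 h2; rewrite /r fineK // ge0_fin_numE //; exact: ltW.
Qed.

Lemma r_gt0 : 0 < r.
Proof. by case/andP: hr; rewrite -/hm hmE lte_fin. Qed.

Lemma sep i j x y : i != j -> A i x -> A j y -> 2 * r <= d x y.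
Proof.
move=> ij Ax Ay.
have h1 : (ereal_inf [set set_dist d (A p.1) (A p.2) | p in [set p : 'I_k * 'I_k | p.1 != p.2]]
   <= set_dist d (A i) (A j))%E by apply: ereal_inf_lbound; exists (i, j).
have h2 : (set_dist d (A i) (A j) <= (d x y)%:E)%E.
  by apply: ereal_inf_lbound; exists x => //; exists y.
have : (hm <= (1 / 2)%:E * (d x y)%:E)%E.
  exact: (lee_wpmul2l _ (le_trans h1 h2)).
rewrite hmE -EFinM lee_fin; lra.
Qed.

Let U := \bigcup_(i in [set: 'I_k]) A i.
Let i0 : 'I_k := Ordinal k0.

Lemma A_ne i : A i !=set0.
Proof.
apply: contrapT => hn.
have e : A i = set0 by apply/seteqP; split => // x Ax; apply: hn; exists x.
by have := hAi i; rewrite e measure0 ltxx.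
Qed.

Lemma U_ne : U !=set0.
Proof. by have [x Ax] := A_ne i0; exists x; exists i0. Qed.

Let dl := Dist d U.
Let di i := Dist d (A i).

Lemma A0E x : A0 d A x <-> r <= dl x.
Proof.
rewrite /A0 /enlarge /=; split => [nA | rd [y Uy dy]].
  rewrite leNgt; apply/negP => /(Dist_lt U_ne) [y Uy dy]; apply: nA.
  by exists y => //; rewrite -/hm hmE lte_fin.
move: dy; rewrite -/hm hmE lte_fin => dy; have := Dist_le hd x Uy.
rewrite -/dl; lra.
Qed.

Lemma dl_le i x : dl x <= di i x.
Proof.
apply: (Dist_sub hd); last exact: A_ne.
by move=> y Ay; exists i.
Qed.

Lemma di0 i x : A i x -> di i x = 0.
Proof. exact: (Dist0 hd (A_ne i)). Qed.

Lemma dl0 i x : A i x -> dl x = 0.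
Proof. by move=> Ax; apply: (Dist0 hd U_ne); exists i. Qed.

Lemma dij i j x : i != j -> 2 * r - di i x <= di j x.
Proof.
move=> ij.
suff : 2 * r - di j x <= di i x by lra.
apply: Dist_glb => //; first exact: A_ne.
move=> y Ay; suff : 2 * r - d x y <= di j x by lra.
apply: Dist_glb => //; first exact: A_ne.
move=> z Az; have := sep ij Ay Az; have := d_tri hd y x z; rewrite (d_sym hd y x).
lra.
Qed.

Lemma mdl : measurable_fun setT dl.
Proof. have := meas_Dist hd hB U_ne. done. Qed.
Lemma mdi i : measurable_fun setT (di i).
Proof. have := meas_Dist hd hB (A_ne i). done. Qed.

Lemma A0_set : A0 d A = [set y | r <= dl y].
Proof. by apply/seteqP; split => x /A0E. Qed.

Lemma mA0 : measurable (A0 d A).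
Proof. by rewrite A0_set; exact: meas_ge_set mdl. Qed.


Let a i := pm mu (A i).
Let a0 := pm mu (A0 d A).
Let Sa := \sum_(i < k) a i.

Lemma a_pos i : 0 < a i.
Proof. exact: pm_pos (mA i) (hAi i). Qed.
Lemma a0_pos : 0 < a0.
Proof. exact: pm_pos mA0 hA0. Qed.

Lemma Adisj i j x : i != j -> A i x -> A j x -> False.
Proof.
move=> ij Ai Aj; have := sep ij Ai Aj; rewrite d_xx //; have := r_gt0; lra.
Qed.

Lemma Delta i : 1 <= a i + Sa.
Proof. by case: hD => _ _ h; exact: h. Qed.

Lemma gap0 : a0 + Sa <= 1.
Proof.
apply: (pm_sum_le1 mu mA0 mA Adisj).
move=> i x /A0E h Ax; rewrite (dl0 Ax) in h; have := r_gt0; lra.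
Qed.

Let m := min_log_ratio d mu A.

Lemma m_def : m = fine (\big[mine/+oo%E]_(i < k) (ln (a i / a0))%:E).
Proof. by []. Qed.

Lemma m_spec : exists i1, m = ln (a i1 / a0) /\ forall i, m <= ln (a i / a0).
Proof.
have [i1 _ e] := @eq_bigmin _ _ _ (+oo%E) i0 (fun _ => true)
  (fun i => (ln (a i / a0))%:E) isT (fun i _ => leey _).
exists i1; rewrite m_def e; split => // i.
have := bigmin_le (+oo)%E i (fun i => (ln (a i / a0))%:E).
by rewrite e lee_fin.
Qed.


Section Inner.
Variable i1 : 'I_k.
Hypothesis hm1 : m = ln (a i1 / a0).
Hypothesis hm2 : forall i, m <= ln (a i / a0).

Let amin := a i1.

Lemma amin_le i : amin <= a i.
Proof.
have := hm2 i; rewrite hm1 ler_ln ?posrE ?divr_gt0 ?a_pos ?a0_pos //.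
by rewrite ler_pM2r // invr_gt0 a0_pos.
Qed.

Lemma amin_ge : 1 - Sa <= amin.
Proof. have := Delta i1; rewrite /amin; lra. Qed.

Lemma a0_le_amin : a0 <= amin.
Proof. have := gap0; have := amin_ge; lra. Qed.

Lemma m_ge0 : 0 <= m.
Proof.
rewrite hm1; apply: ln_ge0; rewrite ler_pdivlMr ?a0_pos // mul1r.
exact: a0_le_amin.
Qed.

Lemma gap_bound (Sx : set T) : measurable Sx ->
  (forall x, Sx x -> ~ A0 d A x) -> (forall j x, Sx x -> A j x -> False) ->
  forall i, pm mu Sx <= m * a i.
Proof.
move=> mSx hS0 hSA i.
have mU : measurable (Sx `|` A0 d A) by apply: measurableU => //; exact: mA0.
have h := pm_sum_le1 mu mU mA Adisj.
have hdj : Sx `&` A0 d A = set0.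
  by apply/seteqP; split => // x [Sxx A0x]; exact: hS0 Sxx A0x.
have e := pmU mu mSx mA0 hdj.
have hBA : forall j x, (Sx `|` A0 d A) x -> A j x -> False.
  move=> j x [Sxx Ax|/A0E + Ax]; first exact: hSA Sxx Ax.
  rewrite (dl0 Ax); have := r_gt0; lra.
have h' := h hBA; rewrite e in h'.
have h2 : pm mu Sx <= amin - a0.
  have := amin_ge; rewrite -/a0 -/Sa in h'; lra.
have a0m := a0_pos; have am : 0 < amin by exact: a_pos.
have h3 : 1 - (amin / a0)^-1 <= m by rewrite hm1; apply: ln_ge1V; rewrite divr_gt0.
rewrite invf_div in h3.
have h4 : amin - a0 <= m * amin.
  have : amin * (1 - a0 / amin) <= amin * m by rewrite ler_wpM2l // ltW.
  by rewrite mulrBr mulr1 mulrCA divff ?gt_eqF // mulr1 mulrC.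
apply: le_trans h2 (le_trans h4 _); rewrite ler_wpM2l ?m_ge0 //; exact: amin_le.
Qed.


Let gs (s : R) := pm mu [set y | s <= dl y].

Lemma mgs s : measurable [set y | s <= dl y].
Proof. exact: meas_ge_set s mdl. Qed.

Lemma gs_mono s t : s <= t -> gs t <= gs s.
Proof. by move=> st; apply: pm_le; [exact: mgs|exact: mgs|move=> y /= ty; lra]. Qed.

Lemma gs_ge_a0 s : s <= r -> a0 <= gs s.
Proof.
move=> sr; apply: pm_le; [exact: mA0|exact: mgs|].
by move=> y /A0E /= h; lra.
Qed.

Lemma gs_half : gs (r / 2) <= amin.
Proof.
have h := pm_sum_le1 mu (mgs (r / 2)) mA Adisj.
have : gs (r / 2) + Sa <= 1.
  apply: h => j x /= hx Ax; rewrite (dl0 Ax) in hx; have := r_gt0; lra.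
have := amin_ge; lra.
Qed.

Let N := (2 * (Num.Def.trunc m).+1)%N.

Lemma N_gt0 : (0 < N)%N.
Proof. by rewrite /N muln_gt0. Qed.

Lemma NR : (N%:R : R) = 2 * ((Num.Def.trunc m).+1)%:R.
Proof. by rewrite /N natrM. Qed.

Lemma mN : m / N%:R <= 1 / 2.
Proof.
have h := truncnS_gt m; rewrite NR.
have t0 : (0 : R) < ((Num.Def.trunc m).+1)%:R by rewrite ltr0n.
rewrite ler_pdivrMr ?mulr_gt0 //; lra.
Qed.

Lemma N_le : (N%:R : R) <= 2 * m + 2.
Proof.
have := truncn_le m; rewrite m_ge0 => h; rewrite NR -natr1; lra.
Qed.

Let us (j : nat) : R := r / 2 + j%:R * (r / (2 * N%:R)).

Lemma NRpos : (0 : R) < N%:R.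
Proof. by rewrite ltr0n N_gt0. Qed.

Lemma us_le j : (j <= N)%N -> us j <= r.
Proof.
move=> jN; rewrite /us.
have : (j%:R : R) <= N%:R by rewrite ler_nat.
have := NRpos; have := r_gt0 => r0 N0 jN'.
have -> : j%:R * (r / (2 * N%:R)) = (j%:R / N%:R) * (r / 2).
  by field; rewrite gt_eqF.
have : (j%:R : R) / N%:R <= 1 by rewrite ler_pdivrMr // mul1r.
have : 0 <= (j%:R : R) / N%:R by rewrite divr_ge0 // ltW.
nra.
Qed.

Lemma us_step j : us j.+1 = us j + r / (2 * N%:R).
Proof. by rewrite /us -natr1; ring. Qed.

Lemma us_pos j : 0 < us j.
Proof.
rewrite /us; have := r_gt0; have := NRpos => N0 r0.
have : 0 <= j%:R * (r / (2 * N%:R)) by rewrite mulr_ge0 // divr_ge0 // ?ltW // mulr_gt0.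
lra.
Qed.

Lemma us0 : us 0 = r / 2.
Proof. by rewrite /us mul0r addr0. Qed.

Lemma usN : us N = r.
Proof.
rewrite /us; have := NRpos => N0; field; rewrite gt_eqF //.
Qed.

Lemma exists_j : exists j, (j < N)%N /\
  gs (us j) <= gs (us j.+1) * (1 + 2 * (m / N%:R)).
Proof.
have gpos j : (j <= N)%N -> 0 < gs (us j).
  by move=> jN; apply: lt_le_trans a0_pos (gs_ge_a0 (us_le jN)).
have hstep j : us j <= us j.+1.
  rewrite us_step; have := r_gt0; have := NRpos => N0 r0.
  have : 0 <= r / (2 * N%:R) by rewrite divr_ge0 // ?ltW // mulr_gt0.
  lra.
pose x j := ln (gs (us j)) - ln (gs (us j.+1)).
have sx : \sum_(j < N) x j <= m.
  rewrite (telesc N (fun j => ln (gs (us j)))) us0 usN hm1.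
  rewrite lnM ?posrE ?a_pos ?invr_gt0 ?a0_pos // lnV ?posrE ?a0_pos //.
  have h1 : ln (gs (r / 2)) <= ln amin.
    rewrite ler_ln ?posrE ?gs_half ?a_pos //.
    by rewrite -us0; apply: gpos.
  have h2 : ln a0 <= ln (gs r).
    by rewrite ler_ln ?posrE ?a0_pos ?gs_ge_a0 // -usN; apply: gpos.
  lra.
have [j [jN xj]] := pigeon N_gt0 sx.
exists j; split => //.
have g1 := gpos j.+1 jN; have g0 := gpos j (ltnW jN).
have x0 : 0 <= x j.
  rewrite /x subr_ge0 ler_ln ?posrE //; exact: gs_mono.
have ex : expR (x j) = gs (us j) / gs (us j.+1).
  by rewrite /x exp.expRD expRN !lnK ?posrE.
have := exp_small x0 (le_trans xj mN); rewrite ex => h.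
have h' : gs (us j) / gs (us j.+1) <= 1 + 2 * (m / N%:R) by lra.
by rewrite ler_pdivrMr // mulrC in h'.
Qed.


Section Constr.
Variable j : nat.
Hypothesis hj : (j < N)%N.
Hypothesis hgj : gs (us j) <= gs (us j.+1) * (1 + 2 * (m / N%:R)).

Let bi : R := - (6 / r).
Let fi (i : 'I_k) y := clamp01 (2 + bi * di i y).
Let Si (i : 'I_k) := [set y | 0 <= 2 + bi * di i y <= 1].
Let h : R := r / (4 * N%:R).
Let u := us j.
Let a' : R := - (u / h).
Let b' : R := h^-1.
Let f0 y := clamp01 (a' + b' * dl y).
Let S0 := [set y | 0 <= a' + b' * dl y <= 1].
Let C0 := [set y | us j.+1 <= dl y].

Lemma h_gt0 : 0 < h.
Proof. by rewrite divr_gt0 ?r_gt0 // mulr_gt0 // NRpos. Qed.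

Lemma u_gt0 : 0 < u.
Proof. exact: us_pos. Qed.

Lemma u_ge : r / 2 <= u.
Proof.
rewrite /u /us; have := r_gt0; have := NRpos => N0 r0.
have : 0 <= j%:R * (r / (2 * N%:R)) by rewrite mulr_ge0 // divr_ge0 // ?ltW // mulr_gt0.
lra.
Qed.

Lemma us1 : us j.+1 = u + 2 * h.
Proof. rewrite us_step /u /h; have := NRpos => N0; field; rewrite gt_eqF //. Qed.

Lemma affE t : a' + b' * t = (t - u) / h.
Proof. rewrite /a' /b'; have := h_gt0 => h0; field; rewrite gt_eqF //. Qed.

Lemma biE t : 2 + bi * t = 2 - 6 * (t / r).
Proof. rewrite /bi; have := r_gt0 => r0; field; rewrite gt_eqF //. Qed.

Lemma le_div (t c v : R) : 0 < v -> t / v <= c -> t <= c * v.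
Proof. by move=> v0; rewrite ler_pdivrMr. Qed.
Lemma ge_div (t c v : R) : 0 < v -> c <= t / v -> c * v <= t.
Proof. by move=> v0; rewrite ler_pdivlMr. Qed.

Lemma Si_bounds i y : Si i y -> r / 6 <= di i y <= r / 3.
Proof.
rewrite /Si /= biE => /andP[h1 h2]; have r0 := r_gt0.
have e1 := le_div r0 (_ : di i y / r <= 1 / 3); have e2 := ge_div r0 (_ : 1 / 6 <= di i y / r).
apply/andP; split; [have := e2 ltac:(lra)|have := e1 ltac:(lra)]; lra.
Qed.

Lemma S0_bounds y : S0 y -> u <= dl y <= u + h.
Proof.
rewrite /S0 /= affE => /andP[h1 h2]; have h0 := h_gt0.
have e1 := le_div h0 h2; have e2 := ge_div h0 h1.
apply/andP; split; lra.
Qed.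

Let F := oc f0 fi.
Let SS := oc S0 Si.
Let CC := oc C0 A.
Let LL := oc `|b'| (fun _ : 'I_k => `|bi|).
Let Bc : R := (r ^+ 2)^-1 * (64 * (m + 1) * m).

Lemma di_ge_dl i x : dl x <= di i x.
Proof. exact: dl_le. Qed.

Lemma lambda_le_Bc : (lambda_k d mu k <= Bc%:E)%E.
Proof.
have r0 := r_gt0; have h0 := h_gt0; have u0 := u_gt0; have uh := u_ge.
have m0 : 0 <= m := m_ge0.
have liftne (i i' : 'I_k) : (lift ord0 i != lift ord0 i') = (i != i').
  by rewrite (inj_eq lift_inj).
apply: (key_lambda (F := F) (S := SS) (C := CC) (L := LL)) => //.
- apply: ocP => [|i]; rewrite /F ?oc0 ?ocl; apply: meas_clamp; apply: meas_aff.
    exact: mdl.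
  exact: mdi.
- by apply: ocP => [|i] x; rewrite /F ?oc0 ?ocl clamp_ge0 clamp_le1.
- apply: ocP => [|i]; rewrite /SS ?oc0 ?ocl; apply: meas_itv_set; apply: meas_aff.
    exact: mdl.
  exact: mdi.
- apply: ocP => [|i]; rewrite /CC ?oc0 ?ocl; [exact: mgs|exact: mA].
- apply: ocP => [|i] x; rewrite /CC /F ?oc0 ?ocl => Cx; apply: clamp1.
    rewrite affE ler_pdivlMr //; move: Cx; rewrite /C0 /= us1; lra.
  by rewrite (di0 Cx) mulr0 addr0 ler1n.
- apply: ocP => [|i]; apply: ocP => [|i'] x; rewrite /CC /F ?oc0 ?ocl.
  + by rewrite eqxx.
  + move=> _ Cx; apply: clamp0; rewrite biE.
    have : us j.+1 <= dl x := Cx; rewrite us1 => hx.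
    have := di_ge_dl i' x => hdi.
    have := ge_div r0 (_ : 1 / 2 <= di i' x / r) => e.
    suff : 1 / 2 <= di i' x / r by lra.
    rewrite ler_pdivlMr //; lra.
  + move=> _ Ax; apply: clamp0; rewrite affE (dl0 Ax).
    rewrite ler_pdivrMr // mul0r; lra.
  + rewrite liftne => ii' Ax; apply: clamp0; rewrite biE.
    have := dij x ii'; rewrite (di0 Ax) => hx.
    suff : 2 <= di i' x / r by lra.
    rewrite ler_pdivlMr //; lra.
- apply: ocP => [|i]; rewrite /CC ?oc0 ?ocl; last exact: hAi.
  rewrite pmE; last exact: mgs.
  rewrite lte_fin; apply: lt_le_trans a0_pos (gs_ge_a0 _); exact: us_le.
- apply: ocP => [|i] x; rewrite /F /SS /LL ?oc0 ?ocl.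
    apply: clamp_loc => y z; exact: (Dist_lipn hd U_ne).
  apply: clamp_loc => y z; exact: (Dist_lipn hd (A_ne i)).
- apply: ocP => [|i]; apply: ocP => [|i'] x; rewrite /SS ?oc0 ?ocl.
  + by rewrite eqxx.
  + move=> _ /S0_bounds /andP[h1 _] /Si_bounds /andP[_ h2].
    have := di_ge_dl i' x; lra.
  + move=> _ /Si_bounds /andP[_ h2] /S0_bounds /andP[h1 _].
    have := di_ge_dl i x; lra.
  + rewrite liftne => ii' /Si_bounds /andP[_ h1] /Si_bounds /andP[_ h2].
    have := dij x ii'; lra.
- by apply: ocP => [|i]; rewrite /LL ?oc0 ?ocl.
- by rewrite /Bc mulr_ge0 // ?invr_ge0 ?sqr_ge0 // mulr_ge0 // mulr_ge0 //; lra.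
apply: ocP => [|i]; rewrite /LL /SS /CC ?oc0 ?ocl.
  have mS0 : measurable S0 by apply: meas_itv_set; apply: meas_aff; exact: mdl.
  have mC0 : measurable C0 by exact: mgs.
  have dj : S0 `&` C0 = set0.
    apply/seteqP; split => // y [/S0_bounds /andP[_ h1]]; rewrite /C0 /= us1; lra.
  have hp : pm mu S0 + pm mu C0 <= gs (us j).
    rewrite -pmU //; apply: pm_le => //; first exact: measurableU.
      exact: mgs.
    move=> y [/S0_bounds /andP[h1 _]|]; rewrite /= -/u //; rewrite /C0 /= us1; lra.
  have g10 : 0 <= pm mu C0 by exact: pm_ge0.
  have NR0 := NRpos.
  set g1 := pm mu C0 in hp g10 *; set pS := pm mu S0 in hp *.
  have hg : gs (us j) <= g1 * (1 + 2 * (m / N%:R)) := hgj.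
  have e1 : N%:R * (g1 * (2 * (m / N%:R))) = 2 * m * g1.
    by field; rewrite gt_eqF.
  have hNp : N%:R * pS <= 2 * m * g1.
    rewrite -e1; apply: ler_wpM2l; first exact: ltW.
    have : pS <= gs (us j) - g1 by lra.
    move=> h'; apply: le_trans h' _; nra.
  have eb : `|b'| ^+ 2 = (r ^+ 2)^-1 * (16 * N%:R ^+ 2).
    rewrite ger0_norm; last by rewrite /b' invr_ge0 ltW.
    rewrite /b' /h; field; rewrite ?gt_eqF //.
  rewrite eb /Bc -!mulrA; apply: ler_wpM2l; first by rewrite invr_ge0 sqr_ge0.
  have hN := N_le.
  have mg : 0 <= m * g1 by rewrite mulr_ge0.
  have pS0 : 0 <= pS by exact: pm_ge0.
  nra.
have mSi : measurable (Si i) by apply: meas_itv_set; apply: meas_aff; exact: mdi.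
have hpS : pm mu (Si i) <= m * pm mu (A i).
  apply: gap_bound => //.
    move=> x /Si_bounds /andP[_ h1] /A0E h2; have := di_ge_dl i x; lra.
  move=> i' x /Si_bounds /andP[h1 h2] Ax.
  have [ii'|ii'] := eqVneq i i'.
    by rewrite ii' (di0 Ax) in h1; lra.
  have ii2 : i' != i by rewrite eq_sym.
  have := dij x ii2; rewrite (di0 Ax); lra.
have eb : `|bi| ^+ 2 = (r ^+ 2)^-1 * 36.
  rewrite /bi normrN ger0_norm; last by rewrite divr_ge0 // ltW.
  field; rewrite gt_eqF //.
rewrite eb /Bc -!mulrA; apply: ler_wpM2l; first by rewrite invr_ge0 sqr_ge0.
have ma : 0 <= m * pm mu (A i) by rewrite mulr_ge0 // ltW // a_pos.
nra.
Qed.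

End Constr.

End Inner.

Lemma main_bound : (lambda_k d mu k <= bound_rhs d mu A (1 / 128))%E.
Proof.
have [i1 [hm1 hm2]] := m_spec.
have [j [hj hgj]] := exists_j hm1.
have hl := lambda_le_Bc hm1 hm2 hj hgj.
rewrite /bound_rhs; case: asboolP => [_|nh]; last by exfalso; apply: nh; split.
apply: le_trans hl _; rewrite lee_fin -/hm -/r -/m.
apply: ler_wpM2l; first by rewrite invr_ge0 sqr_ge0.
have m0 := m_ge0 hm1.
rewrite /psi div1r invrK le_max.
have [m1|m1] := leP m 1.
  by apply/orP; left; nra.
by apply/orP; right; nra.
Qed.

End Main.

Theorem proposition1p2 :
  exists c : Rdefinitions.R, 0 < c /\
  forall (dsp : measure_display) (T : measurableType dsp)
    (d : T -> T -> Rdefinitions.R) (mu : probability T Rdefinitions.R)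
    (k : nat) (A : 'I_k -> set T),
    is_metric d -> metric_complete d -> metric_separable d ->
    (@measurable dsp T = <<s [set U | metric_open d U] >>) ->
    (0 < k)%N ->
    (forall i, measurable (A i)) ->
    in_Delta (fun i => fine (mu (A i))) ->
    (lambda_k d mu k <= bound_rhs d mu A c)%E.
Proof.
exists (1 / 128); split; first by rewrite divr_gt0.
move=> dsp T d mu k A hd _ _ hB k0 mA hD.
have hb := @main_bound _ dsp T d mu k A hd hB k0 mA hD.
rewrite /bound_rhs; case: asboolP => [[hr hA0 hAi]|_]; last exact: leey.
have := hb hr hA0 hAi; rewrite /bound_rhs; case: asboolP => // nh.
by exfalso; apply: nh; split.
Qed.
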